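(* Let $(x_1,Y_1),\dots,(x_T,Y_T)$ be an arbitrary sequence of examples with $x_t\in\mathbb{R}^d$ and $Y_t\subseteq\mathcal{Y}$, and let $\delta>0$, $\eta>0$. Let $W_1,\dots,W_T$ be the iterates produced by SALT with parameters $\delta,\eta$ on this sequence. Then for any $U_*=[u_*^{(1)},\dots,u_*^{(L+1)}]\in\arg\min_{U\in\mathbb{R}^{d\times(L+1)}}\sum_{t=1}^T f_t(U)$, $$\sum_{t=1}^T\bigl(f_t(W_t)-f_t(U_* )\bigr)\le\Bigl(\frac{Q}{2\eta}+\eta\Bigr)\sum_{i=1}^{L+1}\sum_{j=1}^d\|G^{(i)}_{1:T,j}\|_2+\frac{\delta}{2\eta}\|U_*\|_F^2,$$ where $Q=\max_{i\in[L+1],\,t\in[T]}\|w_t^{(i)}-u_*^{(i)}\|_\infty^2$.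
   Context: Let $L\ge 1$, $d\ge 1$, $[n]=\{1,\dots,n\}$, $\mathcal{Y}=[L]$. A multi-label classifier is a matrix $W=[w^{(1)},\dots,w^{(L+1)}]\in\mathbb{R}^{d\times(L+1)}$ (columns $w^{(i)}\in\mathbb{R}^d$); $\|\cdot\|_F$ is the Frobenius norm. For the $t$-th example $(x_t,Y_t)$, with $x_t\in\mathbb{R}^d$, $Y_t\subseteq\mathcal{Y}$ and $\bar Y_t=\mathcal{Y}\setminus Y_t$, the loss is $$f_t(W)=\frac{1}{|Y_t|}\sum_{i\in Y_t}\max\{0,1-(x_t^\top w^{(i)}-x_t^\top w^{(L+1)})\}+\frac{1}{|\bar Y_t|}\sum_{i\in\bar Y_t}\max\{0,1-(x_t^\top w^{(L+1)}-x_t^\top w^{(i)})\},$$ where a term whose index set is empty is taken to be $0$. Given a current classifier $W_t=[w_t^{(1)},\dots,w_t^{(L+1)}]$, define $a_t^{(i)}=\mathbb{1}[x_t^\top w_t^{(i)}-x_t^\top w_t^{(L+1)}<1]$, $b_t^{(i)}=\mathbb{1}[x_t^\top w_t^{(L+1)}-x_t^\top w_t^{(i)}<1]$, $a_t=\sum_{j\in Y_t}a_t^{(j)}$, $b_t=\sum_{j\in\bar Y_t}b_t^{(j)}$, and $\nabla_t^{(i)}=-\frac{a_t^{(i)}}{|Y_t|}x_t$ if $i\in Y_t$; $\nabla_t^{(i)}=\frac{b_t^{(i)}}{|\bar Y_t|}x_t$ if $i\in\bar Y_t$; $\nabla_t^{(L+1)}=\bigl(\frac{a_t}{|Y_t|}-\frac{b_t}{|\bar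 Y_t|}\bigr)x_t$, where $\frac{a_t}{|Y_t|}$ (resp. $\frac{b_t}{|\bar Y_t|}$) is taken to be $0$ when $Y_t=\emptyset$ (resp. $\bar Y_t=\emptyset$). SALT (second-order adaptive label thresholding) with parameters $\delta>0,\eta>0$: $W_1=0$; at round $t$, compute $\nabla_t^{(i)}$ at the current iterate $W_t$ for all $i\in[L+1]$; let $G^{(i)}_{1:t}=[\nabla_1^{(i)},\dots,\nabla_t^{(i)}]\in\mathbb{R}^{d\times t}$ and let $G^{(i)}_{1:t,j}\in\mathbb{R}^t$ denote its $j$-th row; let $s^{(i)}_t\in\mathbb{R}^d$ with $s^{(i)}_{t,j}=\|G^{(i)}_{1:t,j}\|_2$, and $H_t^{(i)}=\delta I+\mathrm{diag}(s_t^{(i)})$; then $$W_{t+1}=\arg\min_{W}\sum_{i=1}^{L+1}\Bigl(\frac{1}{2\eta}(w^{(i)}-w_t^{(i)})^\top H_t^{(i)}(w^{(i)}-w_t^{(i)})+(\nabla_t^{(i)})^\top w^{(i)}\Bigr),$$ i.e. $w_{t+1}^{(i)}=w_t^{(i)}-\eta (H_t^{(i)})^{-1}\nabla_t^{(i)}$ for all $i\in[L+1]$. *)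

(* Defs.v *)
From mathcomp Require Import all_boot all_order all_algebra.
From mathcomp Require Import reals.
Set Implicit Arguments. Unset Strict Implicit. Unset Printing Implicit Defensive.
Import Order.TTheory GRing.Theory Num.Theory.
Local Open Scope ring_scope.

Section SALT.
Variables (R : realType) (d L : nat).

(* Classifier W = [w^(1) .. w^(L+1)] : d x (L+1) matrix; column k : 'I_L.+1.
   Label i : 'I_L (label i+1 in the paper) corresponds to column lift ord_max i
   (value i); the threshold column w^(L+1) is ord_max. *)
Definition lab (i : 'I_L) : 'I_L.+1 := lift ord_max i.
Definition thr : 'I_L.+1 := ord_max.

Definition score (W : 'M[R]_(d, L.+1)) (x : 'cV[R]_d) (k : 'I_L.+1) : R :=
  (x^T *m W) 0 k.

Definition hinge (z : R) : R := Num.max 0 (1 - z).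

(* f_t(W).  If Y (resp. its complement) is empty, the corresponding term is
   0 (the sum is empty; also 0^-1 = 0 in MathComp). *)
Definition loss (x : 'cV[R]_d) (Y : {set 'I_L}) (W : 'M[R]_(d, L.+1)) : R :=
  (if #|Y| == 0%N then 0 else
     (#|Y|%:R)^-1 * \sum_(i in Y) hinge (score W x (lab i) - score W x thr))
  + (if #|~: Y| == 0%N then 0 else
     (#|~: Y|%:R)^-1 * \sum_(i in ~: Y) hinge (score W x thr - score W x (lab i))).

Definition acoef (x : 'cV[R]_d) (W : 'M[R]_(d, L.+1)) (i : 'I_L) : R :=
  (score W x (lab i) - score W x thr < 1)%R%:R.
Definition bcoef (x : 'cV[R]_d) (W : 'M[R]_(d, L.+1)) (i : 'I_L) : R :=
  (score W x thr - score W x (lab i) < 1)%R%:R.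

(* a_t / |Y_t| and b_t / |\bar Y_t|, taken to be 0 on empty index sets *)
Definition a_over (x : 'cV[R]_d) (Y : {set 'I_L}) W : R :=
  if #|Y| == 0%N then 0 else (\sum_(j in Y) acoef x W j) / #|Y|%:R.
Definition b_over (x : 'cV[R]_d) (Y : {set 'I_L}) W : R :=
  if #|~: Y| == 0%N then 0 else (\sum_(j in ~: Y) bcoef x W j) / #|~: Y|%:R.

Definition gcoef (x : 'cV[R]_d) (Y : {set 'I_L}) W (k : 'I_L.+1) : R :=
  match unlift thr k with
  | None => a_over x Y W - b_over x Y W
  | Some i => if i \in Y then - (acoef x W i / #|Y|%:R)
              else bcoef x W i / #|~: Y|%:R
  end.

Definition grad (x : 'cV[R]_d) (Y : {set 'I_L}) W : 'M[R]_(d, L.+1) :=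
  \matrix_(j < d, k < L.+1) (gcoef x Y W k * x j 0).

Variables (delta eta : R) (xs : nat -> 'cV[R]_d) (Ys : nat -> {set 'I_L}).

(* salt_state t = (W_{t+1}, S_t) where S_t j k = sum_{s=1}^t (nabla_s^(k))_j^2 *)
Fixpoint salt_state (t : nat) : 'M[R]_(d, L.+1) * 'M[R]_(d, L.+1) :=
  match t with
  | 0 => (0, 0)
  | t'.+1 =>
    let W := (salt_state t').1 in
    let S := (salt_state t').2 in
    let g := grad (xs t) (Ys t) W in
    let S' := \matrix_(j, k) (S j k + g j k ^+ 2) in
    (\matrix_(j, k) (W j k - eta * g j k / (delta + Num.sqrt (S' j k))), S')
  end.

(* W_t for t >= 1 (W_1 = 0) *)
Definition salt_W (t : nat) : 'M[R]_(d, L.+1) := (salt_state t.-1).1.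

Definition salt_grad (t : nat) : 'M[R]_(d, L.+1) := grad (xs t) (Ys t) (salt_W t).

End SALT.

(* Main.v *)
Require Import Defs.
From mathcomp Require Import all_boot all_order all_algebra.
From mathcomp Require Import reals.
From mathcomp Require Import ring lra.
Import Order.TTheory GRing.Theory Num.Theory.
Local Open Scope ring_scope.

Lemma adagrad_inv (R : realType) (delta eta u Q : R) (g w : nat -> R) (T : nat) :
 0 < delta -> 0 < eta -> w 1%N = 0 ->
 (forall t, (1 <= t)%N -> w t.+1 = w t - eta * g t /
     (delta + Num.sqrt (\sum_(1 <= s < t.+1) g s ^+ 2))) ->
 (forall t, (1 <= t <= T)%N -> (w t - u)^+2 <= Q) ->
 2 * eta * \sum_(1 <= t < T.+1) g t * (w t - u)
  + (delta + Num.sqrt (\sum_(1 <= s < T.+1) g s ^+ 2)) * (w T.+1 - u) ^+ 2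
 <= delta * u ^+ 2 + (Q + 2 * eta ^+ 2) * Num.sqrt (\sum_(1 <= s < T.+1) g s ^+ 2).
Proof.
move=> hd he w1 hw.
elim: T => [|T IH] hQ.
  rewrite !big_geq // sqrtr0 w1 mulr0 add0r !addr0 mulr0 addr0 sub0r sqrrN; lra.
have IH' := IH (fun t ht => hQ t (ltac:(case/andP: ht => h1 h2; apply/andP; split=> //; exact: leqW))).
rewrite (hw T.+1 isT) !(big_nat_recr _ _ (fun s => g s ^+ 2) (isT : (1 <= T.+1)%N)) /=.
rewrite (big_nat_recr _ _ (fun t => g t * _) (isT : (1 <= T.+1)%N)) /=.
set A := \sum_(1 <= s < T.+1) g s ^+ 2.
set Sg := \sum_(1 <= t < T.+1) g t * _.
set gg := g T.+1.
have A0 : 0 <= A by apply: sumr_ge0 => i _; exact: sqr_ge0.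
set a := Num.sqrt A. set b := Num.sqrt (A + gg ^+ 2).
have a0 : 0 <= a by exact: sqrtr_ge0.
have b0 : 0 <= b by exact: sqrtr_ge0.
have ha : a ^+ 2 = A by rewrite sqr_sqrtr.
have hb : b ^+ 2 = A + gg ^+ 2 by rewrite sqr_sqrtr // addr_ge0 // sqr_ge0.
have hab : a <= b by rewrite ler_sqrt ?addr_ge0 ?sqr_ge0 // lerDl sqr_ge0.
rewrite -/A -/gg -/b.
set e := w T.+1 - u.
have eQ : e ^+ 2 <= Q by apply: hQ; rewrite /= leqnn.
set h := delta + b.
have h0 : 0 < h by rewrite /h; lra.
idtac.
set c := gg ^+ 2 / h.
have ch : c * h = gg ^+ 2 by rewrite /c mulfVK // gt_eqF.
have id : 2 * eta * gg * e + h * (e - eta * gg / h) ^+ 2 = h * e ^+ 2 + eta ^+ 2 * c.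
  rewrite /c; field; rewrite gt_eqF //.
have c2 : c <= 2 * (b - a).
  rewrite /c ler_pdivrMr //.
  have : gg ^+ 2 = (b - a) * (b + a) by rewrite (_ : (b - a) * (b + a) = b ^+ 2 - a ^+ 2); [rewrite hb ha; ring | ring].
  move=> ->; have hba : 0 <= b - a by lra.
  have := ler_wpM2l hba (_ : b + a <= h * 2); rewrite /h; nra.
have p1 := ler_wpM2l (_ : 0 <= b - a) eQ.
have p2 := ler_wpM2l (sqr_ge0 eta) c2.
move: IH'; rewrite -/A -/a -/Sg -/e => IH'.
have p1' := p1 (ltac:(lra)).
have -> : w T.+1 - eta * gg / h - u = e - eta * gg / h by rewrite /e; ring.
have -> : 2 * eta * (Sg + gg * e) + h * (e - eta * gg / h) ^+ 2 =
   2 * eta * Sg + (2 * eta * gg * e + h * (e - eta * gg / h) ^+ 2) by ring.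
rewrite id. rewrite /h in IH' p1' *. lra.
Qed.
Lemma hinge_sub (R : realType) (z z' : R) :
  hinge z - hinge z' <= (z < 1)%R%:R * (z' - z).
Proof.
rewrite /hinge !maxElt; case: ifPn => h1; case: ifPn => h2; case: (ltrP z 1) => h3 /=; lra.
Qed.

Lemma ifz (R : realType) (n : nat) (X : R) :
  (if n == 0%N then 0 else (n%:R)^-1 * X) = (n%:R)^-1 * X.
Proof. by case: eqP => // ->; rewrite invr0 mul0r. Qed.

Lemma ifz' (R : realType) (n : nat) (X : R) :
  (if n == 0%N then 0 else X / n%:R) = X / n%:R.
Proof. by case: eqP => // ->; rewrite invr0 mulr0. Qed.

Lemma loss_sub (R : realType) d L (x : 'cV[R]_d) (Y : {set 'I_L})
   (W U : 'M[R]_(d, L.+1)) :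
 loss x Y W - loss x Y U <=
   \sum_(k < L.+1) \sum_(j < d) grad x Y W j k * (W j k - U j k).
Proof.
have -> : \sum_(k < L.+1) \sum_(j < d) grad x Y W j k * (W j k - U j k) =
  \sum_(k < L.+1) gcoef x Y W k * (score W x k - score U x k).
  apply: eq_bigr => k _; rewrite /score !mxE -sumrB mulr_sumr.
  by apply: eq_bigr => j _; rewrite !mxE; ring.
rewrite (bigD1_ord (thr L)) //= /gcoef unlift_none.
under eq_bigr => i _ do rewrite liftK.
rewrite (bigID (fun i => i \in Y)) /=.
under eq_bigr => i iY do rewrite iY.
under [X in _ <= _ + (_ + X)]eq_bigr => i iY do rewrite (negbTE iY).
rewrite /loss /a_over /b_over !ifz !ifz'.
set cY := (#|Y|%:R)^-1. set cN := (#|~: Y|%:R)^-1.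
have -> : \sum_(i < L | i \notin Y) bcoef x W i * cN *
      (score W x (lift (thr L) i) - score U x (lift (thr L) i)) =
   cN * \sum_(i in ~: Y) bcoef x W i * (score W x (lab i) - score U x (lab i)).
  rewrite mulr_sumr; apply: eq_big => [i|i _]; first by rewrite in_setC.
  rewrite /lab /thr; ring.
have -> : \sum_(i in Y) - (acoef x W i * cY) *
      (score W x (lift (thr L) i) - score U x (lift (thr L) i)) =
   - (cY * \sum_(i in Y) acoef x W i * (score W x (lab i) - score U x (lab i))).
  rewrite mulr_sumr -sumrN; apply: eq_bigr => i _.
  rewrite /lab /thr; ring.
have HY : \sum_(i in Y) hinge (score W x (lab i) - score W x (thr L)) -
   \sum_(i in Y) hinge (score U x (lab i) - score U x (thr L)) <=
   (\sum_(j in Y) acoef x W j) * (score W x (thr L) - score U x (thr L)) -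
   \sum_(i in Y) acoef x W i * (score W x (lab i) - score U x (lab i)).
  rewrite -sumrB mulr_suml -sumrB; apply: ler_sum => i _.
  have := @hinge_sub R (score W x (lab i) - score W x (thr L)) (score U x (lab i) - score U x (thr L)); rewrite /acoef; lra.
have HN : \sum_(i in ~: Y) hinge (score W x (thr L) - score W x (lab i)) -
   \sum_(i in ~: Y) hinge (score U x (thr L) - score U x (lab i)) <=
   \sum_(i in ~: Y) bcoef x W i * (score W x (lab i) - score U x (lab i)) -
   (\sum_(j in ~: Y) bcoef x W j) * (score W x (thr L) - score U x (thr L)).
  rewrite -sumrB mulr_suml -sumrB; apply: ler_sum => i _.
  have := @hinge_sub R (score W x (thr L) - score W x (lab i)) (score U x (thr L) - score U x (lab i)); rewrite /bcoef; lra.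
have cY0 : 0 <= cY by rewrite invr_ge0 ler0n.
have cN0 : 0 <= cN by rewrite invr_ge0 ler0n.
have := ler_wpM2l cY0 HY. have := ler_wpM2l cN0 HN.
lra.
Qed.

Lemma adagrad_scalar (R : realType) (delta eta u Q : R) (g w : nat -> R) (T : nat) :
 0 < delta -> 0 < eta -> w 1%N = 0 ->
 (forall t, (1 <= t)%N -> w t.+1 = w t - eta * g t /
     (delta + Num.sqrt (\sum_(1 <= s < t.+1) g s ^+ 2))) ->
 (forall t, (1 <= t <= T)%N -> (w t - u)^+2 <= Q) ->
 \sum_(1 <= t < T.+1) g t * (w t - u) <=
   (Q / (2 * eta) + eta) * Num.sqrt (\sum_(1 <= s < T.+1) g s ^+ 2)
   + delta / (2 * eta) * u ^+ 2.
Proof.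
move=> hd he w1 hw hQ.
have H := @adagrad_inv R delta eta u Q g w T hd he w1 hw hQ.
set S := Num.sqrt _ in H *.
set Sg := \sum_(1 <= t < T.+1) _ in H *.
have S0 : 0 <= S by exact: sqrtr_ge0.
have nn : 0 <= (delta + S) * (w T.+1 - u) ^+ 2 by rewrite mulr_ge0 ?sqr_ge0 //; lra.
have -> : (Q / (2 * eta) + eta) * S + delta / (2 * eta) * u ^+ 2 =
   (delta * u ^+ 2 + (Q + 2 * eta ^+ 2) * S) / (2 * eta).
  by field; rewrite gt_eqF.
rewrite ler_pdivlMr; last lra.
lra.
Qed.

Lemma salt_S (R : realType) d L (delta eta : R) xs Ys (t : nat) j k :
  (@salt_state R d L delta eta xs Ys t).2 j k =
  \sum_(1 <= s < t.+1) salt_grad delta eta xs Ys s j k ^+ 2.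
Proof.
elim: t => [|t IH]; first by rewrite big_geq // mxE.
rewrite (big_nat_recr _ _ _ (isT : (1 <= t.+1)%N)) /= mxE IH.
by [].
Qed.

Lemma salt_rec (R : realType) d L (delta eta : R) xs Ys (t : nat) j k :
  (1 <= t)%N ->
  @salt_W R d L delta eta xs Ys t.+1 j k =
  salt_W delta eta xs Ys t j k - eta * salt_grad delta eta xs Ys t j k /
    (delta + Num.sqrt (\sum_(1 <= s < t.+1) salt_grad delta eta xs Ys s j k ^+ 2)).
Proof.
case: t => // t _.
rewrite /salt_W /= mxE mxE salt_S.
rewrite (big_nat_recr _ _ (fun s => salt_grad delta eta xs Ys s j k ^+ 2) (isT : (1 <= t.+1)%N)).
by [].
Qed.

Theorem theorem2 (R : realType) (d L T : nat)
  (xs : nat -> 'cV[R]_d) (Ys : nat -> {set 'I_L}) (delta eta : R)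
  (Ustar : 'M[R]_(d, L.+1)) :
  0 < delta -> 0 < eta ->
  (forall U : 'M[R]_(d, L.+1),
     \sum_(1 <= t < T.+1) loss (xs t) (Ys t) Ustar
       <= \sum_(1 <= t < T.+1) loss (xs t) (Ys t) U) ->
  let W := salt_W delta eta xs Ys in
  let G := salt_grad delta eta xs Ys in
  let Q := \big[Num.max/0]_(k < L.+1) \big[Num.max/0]_(1 <= t < T.+1)
             (\big[Num.max/0]_(j < d) `|W t j k - Ustar j k|) ^+ 2 in
  \sum_(1 <= t < T.+1) (loss (xs t) (Ys t) (W t) - loss (xs t) (Ys t) Ustar)
    <= (Q / (2 * eta) + eta) *
         \sum_(k < L.+1) \sum_(j < d)
            Num.sqrt (\sum_(1 <= t < T.+1) G t j k ^+ 2)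
       + delta / (2 * eta) * \sum_(j < d) \sum_(k < L.+1) Ustar j k ^+ 2.
Proof.
move=> hd he _; cbv zeta.
set W := salt_W delta eta xs Ys. set G := salt_grad delta eta xs Ys.
set Q := \big[Num.max/0]_(k < L.+1) _.
apply: (@le_trans _ _ (\sum_(1 <= t < T.+1) \sum_(k < L.+1) \sum_(j < d)
          G t j k * (W t j k - Ustar j k))).
  by apply: ler_sum => t _; exact: loss_sub.
rewrite exchange_big /=.
under eq_bigr => k _ do rewrite exchange_big /=.
apply: (@le_trans _ _ (\sum_(k < L.+1) \sum_(j < d)
   ((Q / (2 * eta) + eta) * Num.sqrt (\sum_(1 <= t < T.+1) G t j k ^+ 2)
     + delta / (2 * eta) * Ustar j k ^+ 2))).
  apply: ler_sum => k _; apply: ler_sum => j _.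
  apply: (@adagrad_scalar R delta eta (Ustar j k) Q (fun t => G t j k) (fun t => W t j k) T hd he).
  - by rewrite /W /salt_W /= mxE.
  - by move=> t ht; rewrite /W /G salt_rec.
  - move=> t /andP [t1 tT].
    set M := \big[Num.max/0]_(j0 < d) `|W t j0 k - Ustar j0 k|.
    have h1 : `|W t j k - Ustar j k| <= M.
      by apply: (le_bigmax_seq _ j) => //; rewrite mem_index_enum.
    have h2 : M ^+ 2 <= \big[Num.max/0]_(1 <= t0 < T.+1)
             (\big[Num.max/0]_(j0 < d) `|W t0 j0 k - Ustar j0 k|) ^+ 2.
      by apply: (le_bigmax_seq 0 t xpredT (fun t0 => (\big[Num.max/0]_(j0 < d) `|W t0 j0 k - Ustar j0 k|) ^+ 2)) => //; rewrite mem_index_iota t1 ltnS.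
    have h3 : \big[Num.max/0]_(1 <= t0 < T.+1)
             (\big[Num.max/0]_(j0 < d) `|W t0 j0 k - Ustar j0 k|) ^+ 2 <= Q.
      by apply: (le_bigmax_seq 0 k xpredT (fun k0 => \big[Num.max/0]_(1 <= t0 < T.+1)
             (\big[Num.max/0]_(j0 < d) `|W t0 j0 k0 - Ustar j0 k0|) ^+ 2)) => //; rewrite mem_index_enum.
    rewrite -(real_normK (num_real (W t j k - Ustar j k))).
    have n0 := normr_ge0 (W t j k - Ustar j k).
    apply: le_trans h3; apply: le_trans h2.
    nra.
rewrite le_eqVlt; apply/orP; left; apply/eqP.
rewrite (eq_bigr (fun k : 'I_L.+1 => (Q / (2 * eta) + eta) *
     \sum_(j < d) Num.sqrt (\sum_(1 <= t < T.+1) G t j k ^+ 2) +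
   delta / (2 * eta) * \sum_(j < d) Ustar j k ^+ 2)); last first.
  by move=> k _; rewrite big_split /= -!mulr_sumr.
rewrite big_split /= -!mulr_sumr.
by congr (_ + _ * _); exact: exchange_big.
Qed.
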